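(* Let $m\ge 1$ and let $(a_0,\dots,a_{m-1})$ be a finite sequence of non-negative integers with P-G triangle entries $d_k^{(j)}$. Let $B_j=d_{m-j}^{(j-1)}$ for $1\le j\le m$ be the entries of its eastern edge (so $B_1=a_{m-1}$ and $B_m=d_0^{(m-1)}$), and suppose $0\le B_1\le B_2\le\cdots\le B_m$. Then for every integer $Z\ge 0$ there exists an integer $C_1\ge B_1$ such that, in the P-G triangle generated by the extended sequence $(a_0,\dots,a_{m-1},C_1)$, the entries $C_j:=d_{m+1-j}^{(j-1)}$ ($1\le j\le m+1$) of its new eastern edge satisfy $C_j\ge B_j$ for $1\le j\le m$ and $C_{m+1}=Z$.
   Context: For a finite or infinite sequence $\mathfrak u=(a_0,a_1,\dots)$ of non-negative integers, the P-G triangle generated by $\mathfrak u$ consists of the numbers $d_k^{(j)}$ defined by $d_k^{(0)}=a_k$ and $d_k^{(j+1)}=|d_{k+1}^{(j)}-d_k^{(j)}|$ for $j,k\ge 0$ (for a finite sequence $(a_0,\dots,a_{N-1})$ these are defined for $0\le k\le N-1-j$). *)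

(* Defs.v *)
From mathcomp Require Import all_boot.

Definition absdiff (x y : nat) : nat := (x - y) + (y - x).

(* Only entries with k <= size a - 1 - j are meaningful (the statement only
   uses those). *)
Fixpoint pg (a : seq nat) (j k : nat) : nat :=
  match j with
  | 0 => nth 0 a k
  | j'.+1 => absdiff (pg a j' k.+1) (pg a j' k)
  end.

Definition east (a : seq nat) (j : nat) : nat := pg a j.-1 (size a - j).

(* Main.v *)
Require Import Defs.
From mathcomp Require Import all_boot.
From mathcomp Require Import zify.

Lemma pg_rcons a c j k : k + j < size a -> pg (rcons a c) j k = pg a j k.
Proof.
elim: j k => [|j IH] k /= H.
  by rewrite nth_rcons -(addn0 k) H.
rewrite !IH //; lia.
Qed.

Theorem proposition3p3 (a : seq nat) :
  1 <= size a ->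
  (forall j, 1 <= j -> j < size a -> east a j <= east a j.+1) ->
  forall Z : nat, exists C1 : nat,
    east a 1 <= C1 /\
    (forall j, 1 <= j <= size a -> east a j <= east (rcons a C1) j) /\
    east (rcons a C1) (size a).+1 = Z.
Proof.
move=> Hm _ Z.
set m := size a.
pose b i := pg a i (m - i.+1).
pose S j := \sum_(j <= i < m) b i.
pose c := Z + S 0.
have He : forall j, j <= m -> pg (rcons a c) j (m - j) = Z + S j.
  elim=> [|j IH] Hj.
    by rewrite subn0 /= nth_rcons ltnn eqxx.
  rewrite /= subnSK // IH ?(ltnW Hj) //.
  rewrite pg_rcons; last lia.
  rewrite /S big_ltn //.
  rewrite -/(b j) /absdiff. move: (\sum_(j.+1 <= i < m) b i) (b j) => x y; lia.
exists c; split; last split.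
- rewrite /east /= /c /S big_ltn // -/m /b /=; by rewrite addnCA leq_addr.
- move=> j /andP [H1 H2].
  rewrite /east size_rcons -/m.
  have -> : m.+1 - j = m - j.-1 by lia.
  rewrite He; last lia.
  rewrite /S big_ltn; last lia.
  have -> : m - j = m - (j.-1).+1 by lia.
  rewrite -/(b j.-1); by rewrite addnCA leq_addr.
- rewrite /east size_rcons subnn /=.
  have := He m (leqnn m); rewrite subnn => ->.
  by rewrite /S big_geq ?addn0.
Qed.
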